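(* The class of diamond-weakly modular graphs is closed under gated amalgamation: if $G$ is a gated amalgam of two diamond-weakly modular graphs $G_1$ and $G_2$, then $G$ is diamond-weakly modular.
   Context: All graphs are finite, simple and connected; $d$ is the shortest-path distance and $I(a,b)=\{w: d(a,w)+d(w,b)=d(a,b)\}$. For $S\subseteq V(G)$ and a vertex $y$, a vertex $x\in S$ is a gate of $y$ in $S$ if $x\in I(y,w)$ for all $w\in S$; $S$ (or the subgraph it induces) is gated if every vertex has a gate in $S$. A graph $G$ is a gated amalgam of $G_1$ and $G_2$ if $G_1,G_2$ are gated subgraphs of $G$ with $G_1\cup G_2=G$, $G_1\cap G_2\ne\emptyset$, and there are no edges between $G_1\setminus G_2$ and $G_2\setminus G_1$ (equivalently, $G$ is obtained from $G_1$ and $G_2$ by identifying isomorphic gated subgraphs $H_1\subseteq G_1$, $H_2\subseteq G_2$). Quadrangle condition $(QC)$: for any four vertices $u,v,w,y$ with $d(v,y)=d(w,y)=1$ and $2=d(v,w)\le d(u,v)=d(u,w)=d(u,y)-1$, there exists a common neighbor $z$ of $v$ and $w$ with $d(u,z)=d(u,v)-1$. Triangle diamond condition $(TDC)$: for any three vertices $u,v,w$ with $1=d(v,w)<d(u,v)=d(u,w)$, there exists a common neighbor $z$ of $v$ and $w$ with $d(u,z)=d(u,v)-1$ such that $z$ is adjacent to every vertex $x$ with $d(x,v)=1$, $d(u,x)=d(u,v)-1$ and to every vertex $y$ with $d(y,w)=1$, $d(u,y)=d(u,w)-1$ (diamonds being $K_4$ minus an edge). A graph is diamond-weakly modular if it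 satisfies $(QC)$ and $(TDC)$. *)

(* Defs.v *)
From mathcomp Require Import all_boot all_order.
Set Implicit Arguments. Unset Strict Implicit. Unset Printing Implicit Defensive.

Section Graphs.
Variables (V : finType) (e : rel V).

Definition simple_graph : Prop := symmetric e /\ irreflexive e.
Definition connected_graph : Prop := forall x y : V, connect e x y.

(* ball n x = vertices reachable from x by a walk of length <= n *)
Definition ball (n : nat) (x : V) : {set V} :=
  iter n (fun S => S :|: [set y | [exists z in S, e z y]]) [set x].

(* shortest-path distance: the least n <= #|V| with y in ball n x
   (for connected graphs this is exactly the graph distance) *)
Definition dist (x y : V) : nat := find (fun n => y \in ball n x) (iota 0 #|V|.+1).

Definition interval (a b w : V) : bool := dist a w + dist w b == dist a b.

Definition is_gate (S : {set V}) (y x : V) : Prop :=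
  x \in S /\ forall w, w \in S -> interval y w x.

Definition gated (S : {set V}) : Prop := forall y, exists x, is_gate S y x.

Definition QC : Prop :=
  forall u v w y : V,
    dist v y = 1 -> dist w y = 1 -> dist v w = 2 ->
    2 <= dist u v -> dist u v = dist u w -> dist u y = (dist u v).+1 ->
    exists z, [/\ dist z v = 1, dist z w = 1 & dist u z = (dist u v).-1].

(* Triangle diamond condition; "adjacent to every vertex x with ..." is read
   as "to every such x different from z" (z itself satisfies the conditions). *)
Definition TDC : Prop :=
  forall u v w : V,
    dist v w = 1 -> 1 < dist u v -> dist u v = dist u w ->
    exists z, [/\ dist z v = 1, dist z w = 1, dist u z = (dist u v).-1,
      (forall x, dist x v = 1 -> dist u x = (dist u v).-1 -> x != z -> e z x) &
      (forall y, dist y w = 1 -> dist u y = (dist u w).-1 -> y != z -> e z y)].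

Definition diamond_weakly_modular : Prop := QC /\ TDC.

End Graphs.

Definition induced (V : finType) (e : rel V) (A : {set V}) : rel {x : V | x \in A} :=
  fun x y => e (val x) (val y).
Arguments induced : clear implicits.

Definition gated_amalgam (V : finType) (e : rel V) (A B : {set V}) : Prop :=
  [/\ gated e A, gated e B, A :|: B = setT, A :&: B != set0 &
      forall x y, x \in A :\: B -> y \in B :\: A -> ~~ e x y].

(* Main.v *)
Require Import Defs.
From mathcomp Require Import all_boot all_order zify.
Set Implicit Arguments. Unset Strict Implicit. Unset Printing Implicit Defensive.

Section Gen.
Variables (W : finType) (r : rel W).

Lemma ball0 x : ball r 0 x = [set x].
Proof. by []. Qed.

Lemma ballS_eq n x : ball r n.+1 x = ball r n x :|: [set y | [exists z in ball r n x, r z y]].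
Proof. by []. Qed.

Lemma in_ballS n x y :
  (y \in ball r n.+1 x) = (y \in ball r n x) || [exists z in ball r n x, r z y].
Proof. by rewrite /ball iterS in_setU inE. Qed.

Lemma ball_sub1 n x : ball r n x \subset ball r n.+1 x.
Proof. by apply/subsetP => y Hy; rewrite in_ballS Hy. Qed.

Lemma ball_mono n m x : n <= m -> ball r n x \subset ball r m x.
Proof.
move=> H; rewrite -(subnK H); elim: (m - n) => [|k IH] //=.
exact: (subset_trans IH (ball_sub1 _ _)).
Qed.

Lemma ball_trans n m x y z :
  y \in ball r n x -> z \in ball r m y -> z \in ball r (n + m) x.
Proof.
move=> Hy; elim: m z => [|m IH] z.
  by rewrite ball0 inE addn0 => /eqP ->.
rewrite in_ballS addnS in_ballS => /orP [/IH -> //|/existsP [w /andP [Hw Hwz]]].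
apply/orP; right; apply/existsP; exists w; by rewrite IH.
Qed.

Lemma ball_fix k x : ball r k x = ball r k.+1 x -> forall m, k <= m -> ball r m x = ball r k x.
Proof.
move=> Hk m Hm; rewrite -(subnK Hm); elim: (m - k) => [|j IH]; first by rewrite add0n.
by rewrite addSn ballS_eq IH -ballS_eq -Hk.
Qed.

Lemma ball_grow n x : n.+1 <= #|ball r n x| \/ exists2 k, k < n & ball r k x = ball r k.+1 x.
Proof.
elim: n => [|n [IH|[k Hk Hk']]].
- by left; rewrite ball0 cards1.
- have [Heq|Hne] := eqVneq (ball r n x) (ball r n.+1 x).
    by right; exists n.
  left; have Hp : ball r n x \proper ball r n.+1 x.
    by rewrite properEneq Hne ball_sub1.
  exact: leq_ltn_trans IH (proper_card Hp).
- by right; exists k => //; lia.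
Qed.

Lemma ball_stable n x : ball r n x \subset ball r #|W| x.
Proof.
have [H|[k Hk Hk']] := ball_grow #|W| x.
  by have := leq_trans H (max_card _); rewrite ltnn.
have [Hn|Hn] := leqP n #|W|; first exact: ball_mono.
rewrite (ball_fix Hk') ?(ball_fix Hk' (m:=#|W|)) //; lia.
Qed.

Lemma dist_le n x y : y \in ball r n x -> dist r x y <= n.
Proof.
move=> Hy.
have Hy' : y \in ball r (minn n #|W|) x.
  case: (leqP n #|W|) => Hn //.
  exact: (subsetP (ball_stable n x)).
rewrite /dist; set s := iota 0 #|W|.+1.
have Hi : minn n #|W| < size s by rewrite size_iota; lia.
have : find (fun k => y \in ball r k x) s <= minn n #|W|.
  rewrite leqNgt; apply/negP => Hlt.
  have := before_find 0 Hlt; rewrite nth_iota; last by lia.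
  by rewrite add0n Hy'.
lia.
Qed.

Lemma dist_ball n x y : y \in ball r n x -> y \in ball r (dist r x y) x.
Proof.
move=> Hy; have Hy' := subsetP (ball_stable n x) _ Hy.
rewrite /dist; set s := iota 0 #|W|.+1.
have Hh : has (fun k => y \in ball r k x) s.
  apply/hasP; exists #|W| => //; by rewrite mem_iota; lia.
have := nth_find 0 Hh; rewrite nth_iota ?add0n //.
by rewrite -(size_iota 0 #|W|.+1) -has_find.
Qed.

Lemma path_ball x p : path r x p -> last x p \in ball r (size p) x.
Proof.
elim: p x => [|z p IH] x; first by rewrite ball0 inE eqxx.
rewrite /= => /andP [Hxz Hp].
have Hz : z \in ball r 1 x.
  by rewrite in_ballS; apply/orP; right; apply/existsP; exists x; rewrite ball0 inE eqxx.
by have := ball_trans Hz (IH _ Hp); rewrite add1n.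
Qed.

End Gen.

Section Conn.
Variables (V : finType) (e : rel V).
Hypotheses (esym : symmetric e) (eirr : irreflexive e) (econ : connected_graph e).
Local Notation d := (dist e).

Lemma in_ball_dist x y : y \in ball e (d x y) x.
Proof.
have /connectP [p Hp ->] := econ x y.
exact: dist_ball (path_ball Hp).
Qed.

Lemma dist_leP n x y : (d x y <= n) = (y \in ball e n x).
Proof.
apply/idP/idP => [H|]; last exact: dist_le.
apply: (subsetP (ball_mono e x H)); exact: in_ball_dist.
Qed.

Lemma dist_eq0 x y : (d x y == 0) = (x == y).
Proof.
by rewrite -leqn0 dist_leP ball0 inE eq_sym.
Qed.

Lemma dist_xx x : d x x = 0.
Proof. by apply/eqP; rewrite dist_eq0. Qed.

Lemma dist_tri x y z : d x z <= d x y + d y z.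
Proof. rewrite dist_leP; exact: ball_trans (in_ball_dist x y) (in_ball_dist y z). Qed.

Lemma mem_ball1 x y : e x y -> y \in ball e 1 x.
Proof.
by move=> H; rewrite in_ballS; apply/orP; right; apply/existsP; exists x; rewrite ball0 inE eqxx.
Qed.

Lemma ball_sym n x y : y \in ball e n x -> x \in ball e n y.
Proof.
elim: n y => [|n IH] y.
  by rewrite !ball0 !inE eq_sym.
rewrite in_ballS => /orP [/IH H|/existsP [z /andP [Hz Hzy]]].
  exact: (subsetP (ball_sub1 e n y)).
have H1 : z \in ball e 1 y by apply: mem_ball1; rewrite esym.
by have := ball_trans H1 (IH _ Hz); rewrite add1n.
Qed.

Lemma dist_sym x y : d x y = d y x.
Proof.
apply/eqP; rewrite eqn_leq; apply/andP; split; rewrite dist_leP; apply: ball_sym;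
  exact: in_ball_dist.
Qed.

Lemma dist1 x y : (d x y == 1) = e x y.
Proof.
apply/idP/idP => [H|H].
  have Hxy : x != y by rewrite -dist_eq0 (eqP H).
  have : y \in ball e 1 x by rewrite -dist_leP (eqP H).
  rewrite in_ballS ball0 inE eq_sym (negbTE Hxy) /= => /existsP [z /andP [Hz Hzy]].
  by move: Hz; rewrite inE => /eqP <-.
have Hxy : x != y by apply/eqP => Exy; move: H; rewrite Exy eirr.
have : d x y <= 1 by rewrite dist_leP mem_ball1.
have : d x y != 0 by rewrite dist_eq0.
lia.
Qed.

Lemma dist_step u x k : d u x = k.+1 -> exists y, e y x /\ d u y = k.
Proof.
move=> H.
have : x \in ball e k.+1 u by rewrite -dist_leP H.
rewrite in_ballS -dist_leP H ltnn /= => /existsP [z /andP [Hz Hzx]].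
exists z; split => //.
move: Hz; rewrite -dist_leP => Hz.
have := dist_tri u z x; rewrite H.
have : d z x = 1 by apply/eqP; rewrite dist1.
lia.
Qed.


Lemma gateP S y g : is_gate e S y g -> g \in S /\ forall w, w \in S -> d y g + d g w = d y w.
Proof. by move=> [Hg H]; split => // w Hw; apply/eqP; exact: H. Qed.

Lemma convex S a b x : gated e S -> a \in S -> b \in S -> d a x + d x b = d a b -> x \in S.
Proof.
move=> HS Ha Hb Hx; have [g /gateP [Hg Hgw]] := HS x.
have H1 := Hgw _ Ha; have H2 := Hgw _ Hb.
have H3 := dist_tri a g b.
rewrite (dist_sym a g) (dist_sym a x) in H3 Hx.
have : d x g == 0 by apply/eqP; lia.
by rewrite dist_eq0 => /eqP ->.
Qed.

Lemma gate_in S y g : is_gate e S y g -> y \in S -> g = y.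
Proof.
move=> /gateP [Hg H] Hy; have := H _ Hy; rewrite dist_xx => H0.
have : d y g == 0 by apply/eqP; lia.
by rewrite dist_eq0 eq_sym => /eqP.
Qed.

Section Ind.
Variable S : {set V}.
Hypothesis HS : gated e S.
Local Notation T := {x : V | x \in S}.
Local Notation eS := (induced V e S).

Lemma ball_val n (a x : T) : x \in ball eS n a -> val x \in ball e n (val a).
Proof.
elim: n x => [|n IH] x.
  by rewrite !ball0 !inE => /eqP ->.
rewrite !in_ballS => /orP [/IH -> //|/existsP [z /andP [Hz Hzx]]].
by apply/orP; right; apply/existsP; exists (val z); rewrite IH.
Qed.

Lemma ball_of_dist k (a b : T) : d (val a) (val b) = k -> b \in ball eS k a.
Proof.
elim: k b => [|k IH] b.
  move/eqP; rewrite dist_eq0 => /eqP H.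
  by rewrite ball0 inE; apply/eqP/val_inj.
move=> Hk; have [y [Hyb Hy]] := dist_step Hk.
have HyS : y \in S.
  apply: (convex HS (valP a) (valP b)); rewrite Hk -Hy.
  by have := (dist1 y (val b)); rewrite Hyb => /eqP ->; rewrite addn1.
have := IH (exist _ y HyS) Hy => Hyin.
rewrite in_ballS; apply/orP; right; apply/existsP; exists (exist _ y HyS).
by rewrite Hyin.
Qed.

Lemma induced_dist (a b : T) : dist eS a b = d (val a) (val b).
Proof.
have H := ball_of_dist (erefl (d (val a) (val b))).
apply/eqP; rewrite eqn_leq (dist_le H) /=.
rewrite dist_leP; apply: ball_val; exact: dist_ball H.
Qed.

End Ind.

Lemma dist1E x y : d x y = 1 -> e x y.
Proof. by move/eqP; rewrite dist1. Qed.

Lemma dist1I x y : e x y -> d x y = 1.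
Proof. by move=> H; apply/eqP; rewrite dist1. Qed.

Lemma dist0E x y : d x y = 0 -> x = y.
Proof. by move/eqP; rewrite dist_eq0 => /eqP. Qed.

Lemma QC_transfer S : gated e S -> QC (induced V e S) ->
  forall u v w y, u \in S -> v \in S -> w \in S -> y \in S ->
    d v y = 1 -> d w y = 1 -> d v w = 2 ->
    2 <= d u v -> d u v = d u w -> d u y = (d u v).+1 ->
    exists z, [/\ d z v = 1, d z w = 1 & d u z = (d u v).-1].
Proof.
move=> HS HQ u v w y Hu Hv Hw Hy H1 H2 H3 H4 H5 H6.
have := HQ (exist _ u Hu) (exist _ v Hv) (exist _ w Hw) (exist _ y Hy).
rewrite !induced_dist //= => /(_ H1 H2 H3 H4 H5 H6) [z].
by rewrite !induced_dist //= => -[Z1 Z2 Z3]; exists (val z).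
Qed.

Lemma TDC_transfer S : gated e S -> TDC (induced V e S) ->
  forall u v w, u \in S -> v \in S -> w \in S ->
    d v w = 1 -> 1 < d u v -> d u v = d u w ->
    exists z, [/\ d z v = 1, d z w = 1, d u z = (d u v).-1,
      (forall x, x \in S -> d x v = 1 -> d u x = (d u v).-1 -> x != z -> e z x) &
      (forall y, y \in S -> d y w = 1 -> d u y = (d u w).-1 -> y != z -> e z y)].
Proof.
move=> HS HT u v w Hu Hv Hw H1 H2 H3.
have := HT (exist _ u Hu) (exist _ v Hv) (exist _ w Hw).
rewrite !induced_dist //= => /(_ H1 H2 H3) [z].
rewrite !induced_dist //= => -[Z1 Z2 Z3 Z4 Z5]; exists (val z); split => //.
- move=> x Hx Hxv Hux Hxz. apply: (Z4 (exist _ x Hx)); rewrite ?induced_dist //=.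
- move=> x Hx Hxv Hux Hxz.
  apply: (Z5 (exist _ x Hx)); rewrite ?induced_dist //=.
Qed.

Lemma QC_inside S u v w y : gated e S -> QC (induced V e S) ->
    v \in S -> w \in S -> y \in S ->
    d v y = 1 -> d w y = 1 -> d v w = 2 ->
    2 <= d u v -> d u v = d u w -> d u y = (d u v).+1 ->
    exists z, [/\ d z v = 1, d z w = 1 & d u z = (d u v).-1].
Proof.
move=> HS HQ Hv Hw Hy H1 H2 H3 H4 H5 H6.
have [p /gateP [Hp Hpg]] := HS u.
have Ev := Hpg _ Hv; have Ew := Hpg _ Hw; have Ey := Hpg _ Hy.
have [Hm|Hm] := leqP 2 (d p v).
  have H5' : d p v = d p w by lia.
  have H6' : d p y = (d p v).+1 by lia.
  have [z [Z1 Z2 Z3]] := QC_transfer HS HQ Hp Hv Hw Hy H1 H2 H3 Hm H5' H6'.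
  have Hz : z \in S.
    apply: (convex HS Hp Hv); lia.
  have Ez := Hpg _ Hz.
  exists z; split => //; lia.
have [Hm1|Hm0] : d p v = 1 \/ d p v = 0 by lia.
  exists p; split; lia.
move/dist0E: Hm0 => Epv; subst p.
have : d v w = 0 by lia.
lia.
Qed.

Lemma TDC_inside S u v w : gated e S -> TDC (induced V e S) ->
    v \in S -> w \in S ->
    d v w = 1 -> 1 < d u v -> d u v = d u w ->
    (forall x, d x v = 1 -> d u x = (d u v).-1 -> x \in S) ->
    (forall y, d y w = 1 -> d u y = (d u w).-1 -> y \in S) ->
    exists z, [/\ d z v = 1, d z w = 1, d u z = (d u v).-1,
      (forall x, d x v = 1 -> d u x = (d u v).-1 -> x != z -> e z x) &
      (forall y, d y w = 1 -> d u y = (d u w).-1 -> y != z -> e z y)].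
Proof.
move=> HS HT Hv Hw H1 H2 H3 RX RY.
have [p /gateP [Hp Hpg]] := HS u.
have Ev := Hpg _ Hv; have Ew := Hpg _ Hw.
have [Hm|Hm] := ltnP 1 (d p v).
  have H3' : d p v = d p w by lia.
  have [z [Z1 Z2 Z3 Z4 Z5]] := TDC_transfer HS HT Hp Hv Hw H1 Hm H3'.
  have Hz : z \in S.
    apply: (convex HS Hp Hv); lia.
  have Ez := Hpg _ Hz.
  exists z; split => //; first lia.
  - move=> x Hxv Hux Hxz; have Hx := RX _ Hxv Hux; have Ex := Hpg _ Hx.
    apply: Z4 => //; lia.
  - move=> x Hxv Hux Hxz; have Hx := RY _ Hxv Hux; have Ex := Hpg _ Hx.
    apply: Z5 => //; lia.
have [Hm1|Hm0] : d p v = 1 \/ d p v = 0 by lia.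
  exists p.
  split; try lia.
  - move=> x Hxv Hux Hxz; have Hx := RX _ Hxv Hux; have Ex := Hpg _ Hx.
    have : d p x = 0 by lia.
    by move/dist0E => E; rewrite E eqxx in Hxz.
  - move=> x Hxv Hux Hxz; have Hx := RY _ Hxv Hux; have Ex := Hpg _ Hx.
    have : d p x = 0 by lia.
    by move/dist0E => E; rewrite E eqxx in Hxz.
move/dist0E: Hm0 => Epv; subst p.
have : d v w = 0 by lia.
lia.
Qed.


Section Amalg.
Variables A B : {set V}.
Hypotheses (gA : gated e A) (gB : gated e B) (hU : forall x, x \in A \/ x \in B)
  (cross : forall x y, x \notin A -> y \notin B -> ~~ e x y).

Lemma nbrB x y : x \notin A -> e x y -> y \in B.
Proof. by move=> Hx Hxy; apply/negPn/negP => Hy; move: (cross Hx Hy); rewrite Hxy. Qed.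

Lemma notA_B x : x \notin A -> x \in B.
Proof. by case: (hU x) => // ->. Qed.

Lemma QC_gate u v w y : u \in A -> v \in A -> y \in A -> w \notin A ->
    d v y = 1 -> d w y = 1 -> d v w = 2 -> d u v = d u w ->
    exists z, [/\ d z v = 1, d z w = 1 & d u z = (d u v).-1].
Proof.
move=> Hu Hv Hy Hw H1 H2 H3 H5.
have [g /gateP [Hg Hgg]] := gA w.
have E1 := Hgg _ Hv; have E2 := Hgg _ Hy; have E3 := Hgg _ Hu.
have Hwg : d w g != 0.
  rewrite dist_eq0; apply: contraNneq Hw => ->; exact: Hg.
have S1 := dist_sym g w; have S2 := dist_sym u g; have S3 := dist_sym u v.
have S4 := dist_sym u w; have S5 := dist_sym v w; have S6 := dist_sym y w.
have S7 := dist_sym g v.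
exists g; split; lia.
Qed.

Lemma TDC_contra u v w : u \in A -> w \in A -> v \notin A -> d v w = 1 ->
  d u v = (d u w).+1.
Proof.
move=> Hu Hw Hv H1.
have [g /gateP [Hg Hgg]] := gA v.
have E1 := Hgg _ Hw; have E3 := Hgg _ Hu.
have Hvg : d v g != 0.
  rewrite dist_eq0; apply: contraNneq Hv => ->; exact: Hg.
have : d g w = 0 by lia.
move/dist0E => Egw; subst g.
have S3 := dist_sym u v; have S4 := dist_sym u w; lia.
Qed.

Lemma QC_A u v w y : u \in A -> QC (induced V e A) -> QC (induced V e B) ->
    d v y = 1 -> d w y = 1 -> d v w = 2 ->
    2 <= d u v -> d u v = d u w -> d u y = (d u v).+1 ->
    exists z, [/\ d z v = 1, d z w = 1 & d u z = (d u v).-1].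
Proof.
move=> Hu QA QB H1 H2 H3 H4 H5 H6.
have inB : v \in B -> w \in B -> y \in B -> exists z, [/\ d z v = 1, d z w = 1 & d u z = (d u v).-1].
  by move=> Hv Hw Hy; exact: QC_inside gB QB Hv Hw Hy H1 H2 H3 H4 H5 H6.
have e1 := dist1E H1; have e2 := dist1E H2.
have e1' : e y v by rewrite esym.
have e2' : e y w by rewrite esym.
case: (boolP (y \in A)) => Hy; last first.
  by apply: inB; [exact: nbrB Hy e1' | exact: nbrB Hy e2' | exact: notA_B].
case: (boolP (v \in A)) => Hv; case: (boolP (w \in A)) => Hw.
- exact: QC_inside gA QA Hv Hw Hy H1 H2 H3 H4 H5 H6.
- exact: QC_gate Hu Hv Hy Hw H1 H2 H3 H5.
- have H3' : d w v = 2 by rewrite dist_sym.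
  have [z [Z1 Z2 Z3]] := QC_gate Hu Hw Hy Hv H2 H1 H3' (Logic.eq_sym H5).
  by exists z; split => //; rewrite H5.
- apply: inB; [exact: notA_B | exact: notA_B |].
  exact: nbrB Hv e1.
Qed.


Lemma TDC_A u v w : u \in A -> TDC (induced V e A) -> TDC (induced V e B) ->
    d v w = 1 -> 1 < d u v -> d u v = d u w ->
    exists z, [/\ d z v = 1, d z w = 1, d u z = (d u v).-1,
      (forall x, d x v = 1 -> d u x = (d u v).-1 -> x != z -> e z x) &
      (forall y, d y w = 1 -> d u y = (d u w).-1 -> y != z -> e z y)].
Proof.
move=> Hu TA TB H1 H2 H3.
case: (boolP (v \in A)) => Hv; case: (boolP (w \in A)) => Hw.
- apply: (TDC_inside gA TA Hv Hw H1 H2 H3).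
  + by move=> x Hxv Hux; apply: (convex gA Hu Hv); lia.
  + by move=> x Hxv Hux; apply: (convex gA Hu Hw); lia.
- have H1' : d w v = 1 by rewrite dist_sym.
  have := TDC_contra Hu Hv Hw H1'; lia.
- have := TDC_contra Hu Hw Hv H1; lia.
- apply: (TDC_inside gB TB (notA_B Hv) (notA_B Hw) H1 H2 H3).
  + move=> x Hxv _; apply: (nbrB Hv); rewrite esym; exact: dist1E.
  + move=> x Hxv _; apply: (nbrB Hw); rewrite esym; exact: dist1E.
Qed.

End Amalg.
End Conn.

Theorem theorem2 (V : finType) (e : rel V) (A B : {set V}) :
  simple_graph e -> connected_graph e ->
  gated_amalgam e A B ->
  diamond_weakly_modular (induced V e A) ->
  diamond_weakly_modular (induced V e B) ->
  diamond_weakly_modular e.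
Proof.
move=> [esym eirr] econ [gA gB hU _ hC] [QA TA] [QB TB].
have hUA : forall x, x \in A \/ x \in B.
  move=> x; have : x \in A :|: B by rewrite hU inE.
  by rewrite inE => /orP.
have hUB : forall x, x \in B \/ x \in A.
  by move=> x; case: (hUA x); auto.
have mAB : forall z, z \notin B -> z \in A :\: B.
  move=> z Hz; rewrite inE Hz /=; case: (hUA z) => // H.
  by rewrite H in Hz.
have mBA : forall z, z \notin A -> z \in B :\: A.
  move=> z Hz; rewrite inE Hz /=; case: (hUA z) => // H.
  by rewrite H in Hz.
have cAB : forall x y, x \notin A -> y \notin B -> ~~ e x y.
  by move=> x y Hx Hy; rewrite esym; apply: hC; [apply: mAB | apply: mBA].
have cBA : forall x y, x \notin B -> y \notin A -> ~~ e x y.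
  by move=> x y Hx Hy; apply: hC; [apply: mAB | apply: mBA].
split.
- move=> u v w y H1 H2 H3 H4 H5 H6.
  case: (hUA u) => Hu.
  + exact: (QC_A esym eirr econ gA gB hUA cAB Hu QA QB H1 H2 H3 H4 H5 H6).
  + exact: (QC_A esym eirr econ gB gA hUB cBA Hu QB QA H1 H2 H3 H4 H5 H6).
- move=> u v w H1 H2 H3.
  case: (hUA u) => Hu.
  + exact: (TDC_A esym eirr econ gA gB hUA cAB Hu TA TB H1 H2 H3).
  + exact: (TDC_A esym eirr econ gB gA hUB cBA Hu TB TA H1 H2 H3).
Qed.
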